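(* For all integers $n,i,k\ge0$, as an identity of polynomials in $q$, \[ {n+i\brack i}{n+k\brack k}=\sum_{j\ge0}(-1)^{i+j+k}\,q^{\frac{(k+i-j)(2n+k+i-j+1)}{2}}{j\brack j-i,\,j-k,\,i+k-j}{n+j\brack j}. \] Consequently, defining $P^{(1)}_{k,k}=1$, $P^{(1)}_{k,j}=0$ for $j\neq k$ and $P^{(r+1)}_{k,j}=\sum_i (-1)^{i+j+k}q^{\frac{(k+i-j)(k+i-j+1)}{2}}{j\brack j-i,\,j-k,\,i+k-j}P^{(r)}_{k,i}$, the $P^{(r)}_{k,j}$ are polynomials in $q$ with integer coefficients and ${n+k\brack k}^r=\sum_j q^{(rk-j)n}{n+j\brack j}P^{(r)}_{k,j}$ for all $n,k\ge0$, $r\ge1$.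
   Context: $q$ is an indeterminate; $(q)_0=1$, $(q)_m=(1-q)(1-q^2)\cdots(1-q^m)$. The $q$-binomial ${n\brack k}=\frac{(q)_n}{(q)_k(q)_{n-k}}$ if $0\le k\le n$ and $0$ otherwise. The $q$-multinomial ${m\brack a,b,c}=\frac{(q)_m}{(q)_a(q)_b(q)_c}$ if $a,b,c\ge0$ and $a+b+c=m$, and $0$ otherwise. *)

(* Defs.v *)
From HB Require Import structures.
From mathcomp Require Import all_boot all_order all_algebra fraction.
Set Implicit Arguments. Unset Strict Implicit. Unset Printing Implicit Defensive.
Import Order.TTheory GRing.Theory Num.Theory.
Local Open Scope ring_scope.

Notation "x %:F" := (@FracField.tofrac _ x).
Notation F := {fraction {poly int}}.

Definition q : F := ('X : {poly int})%:F.

Definition qpoch (m : nat) : F := \prod_(i < m) (1 - q ^+ i.+1).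

Definition qbin (n k : nat) : F :=
  if (k <= n)%N then qpoch n / (qpoch k * qpoch (n - k)) else 0.

Definition qmulti (m : nat) (a b c : int) : F :=
  if [&& 0 <= a, 0 <= b, 0 <= c & a + b + c == m%:Z]
  then qpoch m / (qpoch `|a|%N * qpoch `|b|%N * qpoch `|c|%N) else 0.

(* Paux s k j = P^{(s+1)}_{k,j}.  The sum over i is over i <= j, since the
   multinomial vanishes when j - i < 0. *)
Fixpoint Paux (s k j : nat) : F :=
  match s with
  | 0 => (j == k)%:R
  | s'.+1 =>
      \sum_(i < j.+1)
        (-1) ^+ (i + j + k) *
        q ^ (((k%:Z + i%:Z - j%:Z) * (k%:Z + i%:Z - j%:Z + 1)) %/ 2)%Z *
        qmulti j (j%:Z - i%:Z) (j%:Z - k%:Z) (i%:Z + k%:Z - j%:Z) *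
        Paux s' k i
  end.

(* P r k j = P^{(r)}_{k,j}, meaningful for r >= 1 *)
Definition P (r k j : nat) : F := Paux r.-1 k j.

(* Main.v *)
Require Import Defs.
From HB Require Import structures.
From mathcomp Require Import all_boot all_order all_algebra fraction.
From mathcomp Require Import ring lra zify.
Import Order.TTheory GRing.Theory Num.Theory.
Local Open Scope ring_scope.

Lemma q_neq0 : q != 0.
Proof. by rewrite /q tofrac_eq0 polyX_eq0. Qed.

Lemma onemq_neq0 j : 1 - q ^+ j.+1 != 0.
Proof.
rewrite /q -tofracXn -tofrac1 -tofracB tofrac_eq0.
apply/negP => /eqP /(congr1 (fun p : {poly int} => p`_0)).
by rewrite coefB coef1 coefXn coef0 /= subr0 => /eqP; rewrite oner_eq0.
Qed.

Lemma qpochS m : qpoch m.+1 = qpoch m * (1 - q ^+ m.+1).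
Proof. by rewrite /qpoch big_ord_recr. Qed.

Lemma qpoch0 : qpoch 0 = 1.
Proof. by rewrite /qpoch big_ord0. Qed.

Lemma qpoch_neq0 m : qpoch m != 0.
Proof.
elim: m => [|m IH].
  rewrite qpoch0. exact: oner_neq0.
rewrite qpochS. apply: mulf_neq0. exact: IH. exact: onemq_neq0.
Qed.
Lemma qbinE n j : qbin (n + j) j = qpoch (n + j) / (qpoch j * qpoch n).
Proof. rewrite /qbin leq_addl addnK mulrC. reflexivity. Qed.

Lemma R1K (K : fieldType) (A B C d x : K): B != 0 -> C != 0 -> 1 - d != 0 ->
  A * (1 - x * d) / (B * (1 - d) * C) * (1 - d) = A / (B * C) * (1 - x * d).
Proof. move=> h1 h2 h3. field. by rewrite h1 h2 h3. Qed.

Lemma R1 n j : qbin (n + j.+1) j.+1 * (1 - q ^+ j.+1) =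
   qbin (n + j) j * (1 - q ^+ n * q ^+ j.+1).
Proof.
rewrite !qbinE -exprD addnS !qpochS -addnS exprD.
apply: R1K. exact: qpoch_neq0. exact: qpoch_neq0. exact: onemq_neq0.
Qed.

Definition e n j := qbin (n + j) j.
Definition Mq (i k m : nat) : F := if (m <= i)%N && (m <= k)%N then
  qpoch (i + k - m) / (qpoch m * qpoch (i - m) * qpoch (k - m)) else 0.
Definition T n i k m := (-1) ^+ m * q ^+ ('C(m.+1, 2) + m * n) * Mq i k m * e n (i + k - m).
Definition A n i k m := (-1) ^+ m * q ^+ ('C(m.+1, 2) + m * n) * Mq i k m *
   ((1 - q ^+ (i + k - m).+1) * e n (i + k - m).+1).
Definition B n i k m := (-1) ^+ m * q ^+ ('C(m.+1, 2) + m * n) * Mq i k m *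
   (q ^+ n * q ^+ k.+1 * (1 - q ^+ (i - m)) * e n (i + k - m)).
Definition B' n i k m := if m is m'.+1 then B n i k m' else 0.

Lemma claim1 n i k m : T n i k m * (1 - q ^+ n * q ^+ k.+1) = A n i k m - B n i k m.
Proof.
rewrite /T /A /B /Mq.
case: ifP => [/andP [hi hk]|_]; last by rewrite !mulr0 !mul0r subr0.
rewrite /e; set j := (i + k - m)%N.
rewrite [(1 - q ^+ j.+1) * _]mulrC R1.
have -> : q ^+ j.+1 = q ^+ k.+1 * q ^+ (i - m).
  by rewrite -exprD; congr (_ ^+ _); lia.
ring.
Qed.
Lemma KA (K : fieldType) (Q s c X Y Z W P0 PA PB P3 E : K) :
  P0 != 0 -> PA != 0 -> PB != 0 -> 1 - X * Q != 0 -> 1 - Z * Q != 0 -> 1 - W * Q != 0 -> P3 != 0 ->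
  -1 * s * (c * X * Y * Q) * (P3 / (P0 * (1 - X*Q) * PA * PB)) * ((1 - X*Z*W*(Q*Q)) * E)
  - s * c * (P3 * (1 - X*Z*W*(Q*Q)) / (P0 * (PA*(1 - Z*Q)) * (PB*(1 - W*Q)))) * (Y * (X*W*(Q*Q)) * (1 - Z*Q) * E)
  = (1 - X*W*(Q*Q)) * (-1 * s * (c*X*Y*Q) * (P3*(1 - X*Z*W*(Q*Q)) / (P0*(1-X*Q)*PA*(PB*(1-W*Q)))) * E).
Proof. move=> h1 h2 h3 h4 h5 h6 h7. field. by rewrite h1 h2 h3 h4 h5 h6. Qed.

Lemma KB (K : fieldType) (Q s c X Y Z P0 PA P3 E : K) :
  P0 != 0 -> PA != 0 -> 1 - X * Q != 0 -> 1 - Z * Q != 0 ->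
  - (s * c * (P3 / (P0 * (PA * (1 - Z * Q)) * 1)) * (Y * (X * Q) * (1 - Z * Q) * E)) =
  (1 - X * Q) * (-1 * s * (c * X * Y * Q) * (P3 / (P0 * (1 - X * Q) * PA * 1)) * E).
Proof. move=> h1 h2 h4 h5. field. by rewrite h1 h2 h4 h5. Qed.

Lemma KC (K : fieldType) (s c Pi Pk P d D E : K) :
  Pi != 0 -> Pk != 0 -> 1 - d != 0 ->
  s * c * (P / (1 * Pi * Pk)) * ((1 - D) * E) =
  (1 - d) * (s * c * (P * (1 - D) / (1 * Pi * (Pk * (1 - d)))) * E).
Proof. move=> h1 h2 h3. field. by rewrite h1 h2 h3. Qed.

Lemma claim2 n i k m : A n i k m - B' n i k m = (1 - q ^+ k.+1) * T n i k.+1 m.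
Proof.
case: m => [|m].
  rewrite /B' subr0 /A /T /Mq !leq0n /= !subn0 addnS qpoch0 (qpochS (i + k)) (qpochS k).
  have h1 := qpoch_neq0 i. have h2 := qpoch_neq0 k. have h3 := onemq_neq0 k.
  move: h1 h2 h3.
  generalize ((-1 : F) ^+ 0) (q ^+ ('C(1, 2) + 0 * n)) (qpoch i) (qpoch k) (qpoch (i + k))
    (q ^+ k.+1) (q ^+ (i + k).+1) (e n (i + k).+1).
  move=> s c Pi Pk P d D E h1 h2 h3.
  have HH := @KC F ((-1)^+0) c Pi Pk P d D E h1 h2 h3. exact HH.
rewrite /B' /A /B /T /Mq.
case: (leqP m.+1 i) => hi; last first.
  rewrite andFb /= !(mulr0, mul0r) add0r.
  case: ifP => [/andP [hi2 _]|_]; last by rewrite !(mulr0, mul0r) oppr0.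
  have -> : (i - m = 0)%N by lia.
  by rewrite expr0 subrr !(mulr0, mul0r) oppr0.
have EC : q ^+ ('C(m.+2, 2) + m.+1 * n) = q ^+ ('C(m.+1, 2) + m * n) * q ^+ m * q ^+ n * q.
  rewrite binS bin1 -!exprD -exprSr; congr (_ ^+ _); lia.
rewrite EC [(-1) ^+ m.+1]exprS.
case: (leqP m.+1 k) => hk.
  have c1 : (m <= i)%N by lia. have c2 : (m <= k)%N by lia. have c3 : (m < k.+1)%N by lia.
  rewrite c1 c2 c3 /=.
  have [a ->] : exists a, i = (m.+1 + a)%N by exists (i - m.+1)%N; lia.
  have [b ->] : exists b, k = (m.+1 + b)%N by exists (k - m.+1)%N; lia.
  have -> : (m.+1 + a + (m.+1 + b) - m.+1 = (m + a + b).+1)%N by lia.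
  have -> : (m.+1 + a - m.+1 = a)%N by lia.
  have -> : (m.+1 + b - m.+1 = b)%N by lia.
  have -> : (m.+1 + a + (m.+1 + b) - m = (m + a + b).+2)%N by lia.
  have -> : (m.+1 + a - m = a.+1)%N by lia.
  have -> : (m.+1 + b - m = b.+1)%N by lia.
  have -> : (m.+1 + a + (m.+1 + b).+1 - m.+1 = (m + a + b).+2)%N by lia.
  have -> : ((m.+1 + b).+1 - m.+1 = b.+1)%N by lia.
  rewrite (qpochS (m + a + b).+1) (qpochS m) (qpochS a) (qpochS b).
  have -> : (m.+1 + b).+1 = (m + b).+2 by lia.
  have -> : q ^+ (m + a + b).+2 = q ^+ m * q ^+ a * q ^+ b * (q * q).
    by rewrite -!exprD -expr2 -exprD; congr (_ ^+ _); lia.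
  have -> : q ^+ (m + b).+2 = q ^+ m * q ^+ b * (q * q).
    by rewrite -!exprD -expr2 -exprD; congr (_ ^+ _); lia.
  have -> : q ^+ m.+1 = q ^+ m * q by rewrite exprSr.
  have -> : q ^+ a.+1 = q ^+ a * q by rewrite exprSr.
  have -> : q ^+ b.+1 = q ^+ b * q by rewrite exprSr.
  have h1 := qpoch_neq0 m. have h2 := qpoch_neq0 a. have h3 := qpoch_neq0 b.
  have h4 := onemq_neq0 m. have h5 := onemq_neq0 a. have h6 := onemq_neq0 b.
  have h7 := qpoch_neq0 (m + a + b).+1.
  rewrite !exprSr in h4 h5 h6.
  move: h1 h2 h3 h4 h5 h6 h7.
  generalize q ((-1 : F) ^+ m) (q ^+ ('C(m.+1, 2) + m * n)) (q ^+ m) (q ^+ n) (q ^+ a) (q ^+ b)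
    (qpoch m) (qpoch a) (qpoch b) (qpoch (m + a + b).+1) (e n (m + a + b).+2).
  move=> Q s c X Y Z W P0 PA PB P3 E h1 h2 h3 h4 h5 h6 h7. have := @KA F Q ((-1)^+m) c X Y Z W P0 PA PB P3 E h1 h2 h3 h4 h5 h6 h7. move=> HH. exact HH.
case: (eqVneq m k) => [<-|hmk]; last first.
  have c1 : (m <= k)%N = false by lia. have c3 : (m < k.+1)%N = false by lia.
  by rewrite andbF c1 c3 andbF /= !(mulr0, mul0r) subrr.
have c2 : (m <= i)%N by lia.
rewrite andbF c2 leqnn ltnSn /= !(mulr0, mul0r) sub0r.
have [a ->] : exists a, i = (m.+1 + a)%N by exists (i - m.+1)%N; lia.
have -> : (m.+1 + a + m - m = m.+1 + a)%N by lia.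
have -> : (m.+1 + a - m = a.+1)%N by lia.
have -> : (m.+1 + a + m.+1 - m.+1 = m.+1 + a)%N by lia.
have -> : (m.+1 + a - m.+1 = a)%N by lia.
rewrite !subnn qpoch0 (qpochS m) (qpochS a) !exprSr.
have h1 := qpoch_neq0 m. have h2 := qpoch_neq0 a.
have h4 := onemq_neq0 m. have h5 := onemq_neq0 a.
rewrite !exprSr in h4 h5.
move: h1 h2 h4 h5.
generalize q ((-1 : F) ^+ m) (q ^+ ('C(m.+1, 2) + m * n)) (q ^+ m) (q ^+ n) (q ^+ a)
    (qpoch m) (qpoch a) (qpoch (m.+1 + a)) (e n (m.+1 + a)).
move=> Q s c X Y Z P0 PA P3 E h1 h2 h4 h5.
have HH := @KB F Q ((-1)^+m) c X Y Z P0 PA P3 E h1 h2 h4 h5. exact HH.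
Qed.

Lemma e0 n : e n 0 = 1.
Proof. rewrite /e qbinE addn0 qpoch0 mul1r. exact: divff (qpoch_neq0 n). Qed.

Lemma clean n i k : e n i * e n k = \sum_(0 <= m < k.+1) T n i k m.
Proof.
elim: k => [|k IH].
  rewrite big_nat1 /T /Mq leqnn leq0n /= !subn0 !addn0 qpoch0 !mul1r mulr1.
  rewrite divff ?qpoch_neq0 // e0 mulr1 mul1r.
  reflexivity.
apply: (mulfI (onemq_neq0 k)).
rewrite mulrCA [(1 - _) * e n k.+1]mulrC {1}/e R1 -/(e n k) mulrA IH mulr_suml.
rewrite (eq_bigr (fun m => A n i k m - B n i k m)); last by move=> m _; exact: claim1.
rewrite sumrB mulr_sumr.
rewrite [in RHS](eq_bigr (fun m => A n i k m - B' n i k m)); last by move=> m _; rewrite claim2.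
rewrite sumrB.
rewrite [in RHS](big_nat_recr _ _ _ (leq0n k.+1)) /=.
have -> : A n i k k.+1 = 0 by rewrite /A /Mq ltnn andbF !(mulr0, mul0r).
rewrite addr0 [in RHS](big_nat_recl _ _ _ (leq0n k.+1)) /= add0r.
reflexivity.
Qed.

Lemma tri2 m : ('C(m.+1, 2) * 2 = m.+1 * m)%N.
Proof.
elim: m => [|m IH]; first by [].
rewrite binS bin1 mulnDl IH. nia.
Qed.

Lemma sum_ext (f : nat -> F) Bd N : (Bd <= N)%N -> (forall j, (Bd <= j)%N -> f j = 0) ->
  \sum_(0 <= j < N) f j = \sum_(0 <= j < Bd) f j.
Proof.
move=> hBN hf.
rewrite (big_cat_nat (leq0n Bd) hBN) /=.
rewrite [X in _ + X]big_nat_cond [X in _ + X]big1 ?addr0 //.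
move=> j /andP [/andP [h1 _] _]. exact: hf.
Qed.

Lemma qmulti0 j a b c : ~~ [&& 0 <= a, 0 <= b, 0 <= c & a + b + c == j%:Z] -> qmulti j a b c = 0.
Proof. by rewrite /qmulti => /negbTE ->. Qed.

Lemma term_eq n i k j : (j <= i + k)%N ->
  (-1) ^+ (i + j + k) *
       q ^ (((k%:Z + i%:Z - j%:Z) * (2 * n%:Z + k%:Z + i%:Z - j%:Z + 1)) %/ 2)%Z *
       qmulti j (j%:Z - i%:Z) (j%:Z - k%:Z) (i%:Z + k%:Z - j%:Z) *
       qbin (n + j) j = T n i k (i + k - j).
Proof.
move=> hj.
set m := (i + k - j)%N.
have hm : (i + k - m = j)%N by rewrite /m; lia.
rewrite /T hm.
have -> : (i + j + k = m + 2 * j)%N by rewrite /m; lia.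
rewrite exprD exprM sqrrN expr1n expr1n mulr1.
have -> : ((k%:Z + i%:Z - j%:Z) * (2 * n%:Z + k%:Z + i%:Z - j%:Z + 1)) =
    (('C(m.+1, 2) + m * n)%N%:Z * 2)%R.
  have H := tri2 m.
  have -> : (k%:Z + i%:Z - j%:Z) = m%:Z by rewrite /m; lia.
  lia.
rewrite mulzK // -exprnP.
congr (_ * _ * _).
rewrite /Mq.
case hc: ((m <= i)%N && (m <= k)%N); [move/andP: hc => [hi hk]|].
  have -> : (j%:Z - i%:Z) = (k - m)%N%:Z by rewrite /m; lia.
  have -> : (j%:Z - k%:Z) = (i - m)%N%:Z by rewrite /m; lia.
  have -> : (i%:Z + k%:Z - j%:Z) = m%:Z by rewrite /m; lia.
  have c1 : [&& 0 <= (k - m)%N%:Z, 0 <= (i - m)%N%:Z, 0 <= m%:Z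
     & (k - m)%N%:Z + (i - m)%N%:Z + m%:Z == j%:Z :> int].
    apply/and4P; split; try by []. apply/eqP. rewrite /m; lia.
  rewrite /qmulti c1 !absz_nat hm.
  congr (_ / _). rewrite mulrC [qpoch (k - m) * _]mulrC mulrA. reflexivity.
rewrite /qmulti; case: ifP => // /and4P [h1 h2 h3 /eqP h4].
exfalso. move/negbT: hc. rewrite negb_and -!ltnNge => /orP [] hc; rewrite /m in hc; lia.
Qed.

Lemma T_big n i k m : (k < m)%N -> T n i k m = 0.
Proof.
move=> h. rewrite /T /Mq.
have -> : (m <= k)%N = false by lia.
by rewrite andbF !(mulr0, mul0r).
Qed.

Definition term n i k j :=
       (-1) ^+ (i + j + k) *
       q ^ (((k%:Z + i%:Z - j%:Z) * (2 * n%:Z + k%:Z + i%:Z - j%:Z + 1)) %/ 2)%Z *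
       qmulti j (j%:Z - i%:Z) (j%:Z - k%:Z) (i%:Z + k%:Z - j%:Z) *
       qbin (n + j) j.

Lemma part1 n i k N : (i + k < N)%N ->
     qbin (n + i) i * qbin (n + k) k =
     \sum_(j < N)
       (-1) ^+ (i + j + k) *
       q ^ (((k%:Z + i%:Z - j%:Z) * (2 * n%:Z + k%:Z + i%:Z - j%:Z + 1)) %/ 2)%Z *
       qmulti j (j%:Z - i%:Z) (j%:Z - k%:Z) (i%:Z + k%:Z - j%:Z) *
       qbin (n + j) j.
Proof.
move=> hN.
change (e n i * e n k = \sum_(j < N) term n i k j).
rewrite -(big_mkord (fun _ => true) (term n i k)) (@sum_ext _ (i + k).+1 N) //; last first.
  move=> j hj. rewrite /term qmulti0 ?(mulr0, mul0r) //.
  apply/negP => /and4P [_ _ h3 _]. lia.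
rewrite (eq_big_nat _ _ (F2 := fun j => T n i k (i + k - j))); last first.
  move=> j /andP [_ hj]. apply: term_eq. lia.
rewrite big_nat_rev /=.
rewrite (eq_big_nat _ _ (F2 := fun j => T n i k j)); last first.
  move=> j /andP [_ hj]. congr (T n i k _). lia.
rewrite (@sum_ext _ k.+1 (i + k).+1); last 2 first.
- lia.
- move=> j hj. exact: T_big.
exact: clean.
Qed.

Definition isP (x : F) := exists p : {poly int}, x = p%:F.

Lemma isP0 : isP 0. Proof. exists 0; by rewrite tofrac0. Qed.
Lemma isP1 : isP 1. Proof. exists 1; by rewrite tofrac1. Qed.
Lemma isPD x y : isP x -> isP y -> isP (x + y).
Proof. move=> [p ->] [p' ->]; exists (p + p'); by rewrite tofracD. Qed.
Lemma isPM x y : isP x -> isP y -> isP (x * y).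
Proof. move=> [p ->] [p' ->]; exists (p * p'); by rewrite tofracM. Qed.
Lemma isPN x : isP x -> isP (- x).
Proof. move=> [p ->]; exists (- p); by rewrite tofracN. Qed.
Lemma isPq : isP q. Proof. by exists 'X. Qed.
Lemma isPX x m : isP x -> isP (x ^+ m).
Proof. move=> [p ->]; exists (p ^+ m); by rewrite tofracXn. Qed.
Lemma isPsum m (f : 'I_m -> F) : (forall i, isP (f i)) -> isP (\sum_(i < m) f i).
Proof.
move=> h. elim/big_ind: _ => //; [exact: isP0 | exact: isPD].
Qed.
Lemma isPnat (b : nat) : isP b%:R.
Proof. exists b%:R. by rewrite rmorph_nat. Qed.

Lemma KP (K : fieldType) (Pk Pa P X Y : K) : Pk != 0 -> Pa != 0 -> 1 - X != 0 -> 1 - Y != 0 ->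
  P * (1 - X * Y) / (Pk * (1 - X) * (Pa * (1 - Y))) =
  P / (Pk * (Pa * (1 - Y))) + X * (P / (Pk * (1 - X) * Pa)).
Proof. move=> h1 h2 h3 h4. field. by rewrite h1 h2 h3 h4. Qed.

Lemma qpascal n k : qbin n.+1 k.+1 = qbin n k + q ^+ k.+1 * qbin n k.+1.
Proof.
rewrite /qbin ltnS.
case: (leqP k.+1 n) => h.
- have [a ->] : exists a, n = (k.+1 + a)%N by exists (n - k.+1)%N; lia.
  have c1 : (k <= k.+1 + a)%N by lia.
  rewrite c1.
  have -> : ((k.+1 + a).+1 - k.+1 = a.+1)%N by lia.
  have -> : (k.+1 + a - k = a.+1)%N by lia.
  have -> : (k.+1 + a - k.+1 = a)%N by lia.
  rewrite (qpochS (k.+1 + a)) (qpochS k) (qpochS a).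
  have -> : q ^+ (k.+1 + a).+1 = q ^+ k.+1 * q ^+ a.+1 by rewrite -exprD; congr (_ ^+ _); lia.
  have h1 := qpoch_neq0 k. have h2 := qpoch_neq0 a. have h3 := onemq_neq0 k. have h4 := onemq_neq0 a.
  move: h1 h2 h3 h4.
  generalize (qpoch k) (qpoch a) (qpoch (k.+1 + a)) (q ^+ k.+1) (q ^+ a.+1).
  move=> Pk Pa P X Y h1 h2 h3 h4.
  have HH := @KP F Pk Pa P X Y h1 h2 h3 h4. exact HH.
case: (eqVneq k n) => [<-|hkn].
  rewrite leqnn !subnn mulr0 addr0 qpoch0 !mulr1.
  rewrite divff ?qpoch_neq0 //. rewrite divff ?qpoch_neq0 //.
have c2 : (k <= n)%N = false by lia.
by rewrite c2 mulr0 addr0.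
Qed.

Lemma isP_qbin n k : isP (qbin n k).
Proof.
elim: n k => [|n IH] [|k].
- rewrite /qbin /= qpoch0 mulr1 divff ?oner_neq0 //. exact: isP1.
- rewrite /qbin /=. exact: isP0.
- rewrite /qbin /= subn0 qpoch0 mul1r divff ?qpoch_neq0 //. exact: isP1.
- rewrite qpascal. apply: isPD; first exact: IH. apply: isPM; last exact: IH.
  apply: isPX. exact: isPq.
Qed.

Lemma KM (K : fieldType) (P Pa Pb Pc Pbc : K) : Pbc != 0 -> Pa != 0 -> Pb != 0 -> Pc != 0 ->
  P / (Pa * Pb * Pc) = P / (Pa * Pbc) * (Pbc / (Pb * Pc)).
Proof. move=> h1 h2 h3 h4. field. by rewrite h1 h2 h3 h4. Qed.

Lemma isP_qmulti j a b c : isP (qmulti j a b c).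
Proof.
rewrite /qmulti; case: ifP => [/and4P [ha hb hc /eqP hs]|_]; last exact: isP0.
have [A eA] : exists A : nat, a = A%:Z by exists `|a|%N; rewrite gez0_abs.
have [B eB] : exists B : nat, b = B%:Z by exists `|b|%N; rewrite gez0_abs.
have [C eC] : exists C : nat, c = C%:Z by exists `|c|%N; rewrite gez0_abs.
subst a b c. rewrite !absz_nat.
have -> : j = (A + (B + C))%N by lia.
have E1 : qbin (A + (B + C)) A = qpoch (A + (B + C)) / (qpoch A * qpoch (B + C)).
  by rewrite /qbin leq_addr addKn.
have E2 : qbin (B + C) B = qpoch (B + C) / (qpoch B * qpoch C).
  by rewrite /qbin leq_addr addKn.
have HH := @KM F (qpoch (A + (B + C))) (qpoch A) (qpoch B) (qpoch C) (qpoch (B + C))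
  (qpoch_neq0 _) (qpoch_neq0 _) (qpoch_neq0 _) (qpoch_neq0 _).
rewrite HH -E1 -E2. apply: isPM; exact: isP_qbin.
Qed.

Lemma isP_expz (z : int) : (0 <= z)%R -> isP (q ^ z).
Proof.
move=> hz. have [N ->] : exists N : nat, z = N%:Z by exists `|z|%N; rewrite gez0_abs.
rewrite -exprnP. apply: isPX. exact: isPq.
Qed.

Lemma isP_Paux s k j : isP (Paux s k j).
Proof.
elim: s j => [|s IH] j /=; first exact: isPnat.
apply: isPsum => i. apply: isPM; last exact: IH.
apply: isPM; last exact: isP_qmulti.
apply: isPM; first by apply: isPX; apply: isPN; exact: isP1.
apply: isP_expz. rewrite divz_ge0 //.
set m := (k%:Z + i%:Z - j%:Z)%R.
case: (lerP 0 m) => h.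
  apply: mulr_ge0 => //. lia.
apply: mulr_le0; lia.
Qed.

Lemma part2 (r k j : nat) : (1 <= r)%N -> exists p : {poly int}, P r k j = p%:F.
Proof. move=> _. exact: isP_Paux. Qed.

Lemma Paux_big s k j : (s.+1 * k < j)%N -> Paux s k j = 0.
Proof.
elim: s j => [|s IH] j h /=.
  rewrite mul1n in h. by rewrite gtn_eqF.
apply: big1 => i _.
case: (leqP j (i + k)) => hik.
  rewrite IH ?mulr0 //. rewrite mulSn in h. lia.
rewrite qmulti0 ?(mulr0, mul0r) //.
apply/negP => /and4P [_ _ h3 _]. lia.
Qed.

Lemma sum_ext_ord (f : nat -> F) Bd N : (Bd <= N)%N -> (forall j, (Bd <= j)%N -> f j = 0) ->
  \sum_(j < N) f j = \sum_(j < Bd) f j.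
Proof.
move=> h1 h2. rewrite -(big_mkord (fun _ => true) f) -(big_mkord (fun _ => true) f).
exact: sum_ext.
Qed.

Lemma part1' n i k N : (i + k < N)%N -> e n i * e n k = \sum_(j < N) term n i k j.
Proof. exact: part1. Qed.

Lemma expq_add (a b : int) : q ^ (a + b) = q ^ a * q ^ b.
Proof. exact: expfzDr q_neq0. Qed.

Lemma ptw s n k i j :
  q ^ (((s.+1 : nat)%:Z * k%:Z - i%:Z) * n%:Z) * Paux s k i * term n i k j =
  q ^ (((s.+2 : nat)%:Z * k%:Z - j%:Z) * n%:Z) * e n j *
  ((-1) ^+ (i + j + k) *
        q ^ (((k%:Z + i%:Z - j%:Z) * (k%:Z + i%:Z - j%:Z + 1)) %/ 2)%Z *
        qmulti j (j%:Z - i%:Z) (j%:Z - k%:Z) (i%:Z + k%:Z - j%:Z) *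
        Paux s k i).
Proof.
rewrite /term.
set m := (k%:Z + i%:Z - j%:Z)%R.
have -> : (m * (2 * n%:Z + k%:Z + i%:Z - j%:Z + 1) = (m * n%:Z) * 2 + m * (m + 1))%R.
  rewrite /m. ring.
rewrite divzMDl //.
have E : (q ^ (((s.+1 : nat)%:Z * k%:Z - i%:Z) * n%:Z) * q ^ (m * n%:Z + ((m * (m + 1)) %/ 2)%Z)
   = q ^ (((s.+2 : nat)%:Z * k%:Z - j%:Z) * n%:Z) * q ^ ((m * (m + 1)) %/ 2)%Z).
  rewrite -!expq_add. congr (q ^ _). have -> : ((s.+2 : nat)%:Z = (s.+1 : nat)%:Z + 1)%R by lia. rewrite /m. ring.
set A := q ^ (_ * n%:Z). set B := q ^ (m * n%:Z + _)%Z.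
set C := q ^ (((s.+2 : nat)%:Z * k%:Z - j%:Z) * n%:Z). set D := q ^ ((m * (m + 1)) %/ 2)%Z.
have -> : (A * Paux s k i * ((-1) ^+ (i + j + k) * B * qmulti j (j%:Z - i%:Z) (j%:Z - k%:Z) (i%:Z + k%:Z - j%:Z) * qbin (n + j) j)
  = (A * B) * (Paux s k i * (-1) ^+ (i + j + k) * qmulti j (j%:Z - i%:Z) (j%:Z - k%:Z) (i%:Z + k%:Z - j%:Z) * qbin (n + j) j))%R by ring.
rewrite E /e -/C -/D. ring.
Qed.

Lemma part3s s : forall n k N, (s.+1 * k < N)%N ->
  e n k ^+ s.+1 = \sum_(j < N) q ^ (((s.+1 : nat)%:Z * k%:Z - j%:Z) * n%:Z) * e n j * Paux s k j.
Proof.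
elim: s => [|s IH] n k N hN.
  rewrite mul1n in hN.
  rewrite expr1 (bigD1 (Ordinal hN)) //= eqxx mulr1.
  have -> : ((Posz 1 * k%:Z - k%:Z) * n%:Z = 0)%R by lia.
  rewrite expr0z mul1r big1 ?addr0 //.
  move=> j hj. have /negbTE -> : (nat_of_ord j != k).
    apply: contra hj => /eqP hjk. apply/eqP. exact: val_inj.
  by rewrite mulr0.
rewrite exprSr (IH n k (s.+1 * k).+1) // mulr_suml.
rewrite (eq_bigr (fun i : 'I_(s.+1 * k).+1 => \sum_(j < N)
   (q ^ (((s.+1 : nat)%:Z * k%:Z - i%:Z) * n%:Z) * Paux s k i) * term n i k j)); last first.
  move=> i _.
  have hi : (i + k < N)%N by have := ltn_ord i; rewrite mulSn in hN; lia.
  rewrite -mulr_sumr -part1' //. ring.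
rewrite exchange_big /=.
apply: eq_bigr => j _.
rewrite mulr_sumr.
pose H := fun i : nat => q ^ (((s.+2 : nat)%:Z * k%:Z - j%:Z) * n%:Z) * e n j *
  ((-1) ^+ (i + j + k) *
        q ^ (((k%:Z + i%:Z - j%:Z) * (k%:Z + i%:Z - j%:Z + 1)) %/ 2)%Z *
        qmulti j (j%:Z - i%:Z) (j%:Z - k%:Z) (i%:Z + k%:Z - j%:Z) *
        Paux s k i).
transitivity (\sum_(i < (s.+1 * k).+1) H i).
  apply: eq_bigr => i _. rewrite /H. exact: ptw.
have HA : forall i, ((s.+1 * k).+1 <= i)%N -> H i = 0.
  move=> i hi. by rewrite /H Paux_big ?(mulr0, mul0r).
have HB : forall i, (j.+1 <= i)%N -> H i = 0.
  move=> i hi. rewrite /H qmulti0 ?(mulr0, mul0r) //.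
  apply/negP => /and4P [h1 _ _ _]. lia.
rewrite (@sum_ext_ord H (minn (s.+1 * k).+1 j.+1) (s.+1 * k).+1); last 2 first.
- exact: geq_minl.
- move=> i hi. case: (leqP (s.+1 * k).+1 i) => h; first exact: HA.
  apply: HB. move: hi h. rewrite /minn. case: ifP; lia.
symmetry.
rewrite (@sum_ext_ord H (minn (s.+1 * k).+1 j.+1) j.+1); last 2 first.
- exact: geq_minr.
- move=> i hi. case: (leqP (s.+1 * k).+1 i) => h; first exact: HA.
  apply: HB. move: hi h. rewrite /minn. case: ifP; lia.
reflexivity.
Qed.

Theorem mainTheorem9 :
  (forall (n i k N : nat), (i + k < N)%N ->
     qbin (n + i) i * qbin (n + k) k =
     \sum_(j < N)
       (-1) ^+ (i + j + k) *
       q ^ (((k%:Z + i%:Z - j%:Z) * (2 * n%:Z + k%:Z + i%:Z - j%:Z + 1)) %/ 2)%Z *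
       qmulti j (j%:Z - i%:Z) (j%:Z - k%:Z) (i%:Z + k%:Z - j%:Z) *
       qbin (n + j) j)
  /\
  (forall (r k j : nat), (1 <= r)%N ->
     exists p : {poly int}, P r k j = p%:F)
  /\
  (forall (n k r N : nat), (1 <= r)%N -> (r * k < N)%N ->
     qbin (n + k) k ^+ r =
     \sum_(j < N) q ^ ((r%:Z * k%:Z - j%:Z) * n%:Z) * qbin (n + j) j * P r k j).
Proof.
split; first exact: part1.
split; first exact: part2.
move=> n k r N hr hN.
case: r hr hN => [//|s] _ hN.
exact: part3s.
Qed.
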